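(* Let $(V,\tau)$ be a topological mixed lattice space. (a) If $A\subseteq V$ is balanced and absorbing, then $MF_1(A)=-MF_2(A)$, and the set $B=MF_1(A)+MF_2(A)$ is balanced and absorbing and has both of the following properties: ($y\in B$ and $0\le x\preccurlyeq y$) implies $x\in B$; ($y\in B$ and $0\preccurlyeq x\le y$) implies $x\in B$. If in addition $A$ is convex, then $MF_1(A)$, $MF_2(A)$ and $B$ are convex. (b) If $\tau$ is locally mixed-full, then every neighborhood of zero contains a balanced absorbing neighborhood $W$ of zero such that ($y\in W$, $0\le x\preccurlyeq y$) implies $x\in W$ and ($y\in W$, $0\preccurlyeq x\le y$) implies $x\in W$. If $\tau$ is moreover locally convex, $W$ can additionally be chosen convex.
   Context: A mixed lattice vector space $(V,\le,\preccurlyeq)$ is a real vector space $V$ with two partial orderings $\le$ (initial order) and $\preccurlyeq$ (specific order), each making $V$ a partially ordered vector space, with positive cones $V_p=\{x:0\le x\}$, $V_{sp}=\{x:0\preccurlyeq x\}$, such that: (1) for all $x,y$ the elements $x\curlyvee y=\min\{w: w\succcurlyeq x,\ w\ge y\}$ and $x\curlywedge y=\max\{w: w\preccurlyeq x,\ w\le y\}$ exist (min/max with respect to $\le$); (2) $x\preccurlyeq y$ implies $x\le y$; (3) $x\curlyvee y, x\curlywedge y\in V_{sp}$ whenever $x,y\in V_{sp}$. A topological mixed lattice space is such a $V$ with a vector topology $\tau$ for which $(x,y)\mapsto x\curlyvee y$ and $(x,y)\mapsto x\curlywedge y$ are continuous $V\times V\to V$ (product topology). For $A\subseteq V$: $MF_1(A)=\{y: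 x\preccurlyeq y\le z \text{ for some } x,z\in A\}$, $MF_2(A)=\{y: x\le y\preccurlyeq z \text{ for some } x,z\in A\}$. A vector topology is locally mixed-full if every neighborhood of zero contains a neighborhood $W$ of zero such that $y\in W$ and $0\preccurlyeq x\le y$ imply $x\in W$. *)

(* Defs.v *)
From HB Require Import structures.
From mathcomp Require Import all_boot all_order all_algebra.
From mathcomp Require Import all_classical all_reals all_analysis.
Set Implicit Arguments. Unset Strict Implicit. Unset Printing Implicit Defensive.
Import Order.TTheory GRing.Theory Num.Theory.
Local Open Scope classical_set_scope.
Local Open Scope ring_scope.

Section MixedLattice.
Variables (R : realType) (V : lmodType R).

Definition ordered_vector_space (le : V -> V -> Prop) : Prop :=
  [/\ (forall x, le x x),
      (forall x y, le x y -> le y x -> x = y),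
      (forall x y z, le x y -> le y z -> le x z),
      (forall x y z, le x y -> le (x + z) (y + z)) &
      (forall (a : R) x y, 0 <= a -> le x y -> le (a *: x) (a *: y))].

(** A mixed lattice vector space structure on V: initial order [le] (<=),
    specific order [sle] (≼), and the mixed envelopes
    [mup x y] = x ⋎ y = min_{<=} {w | w ≽ x, w >= y} and
    [mlow x y] = x ⋏ y = max_{<=} {w | w ≼ x, w <= y}.
    Since [le] is antisymmetric these min/max are unique, so giving them
    as functions with their defining property is the same as requiring
    their existence. *)
Record mixed_lattice := MixedLattice {
  ml_le : V -> V -> Prop;
  ml_sle : V -> V -> Prop;
  ml_up : V -> V -> V;
  ml_low : V -> V -> V;
  ml_le_ovs : ordered_vector_space ml_le;
  ml_sle_ovs : ordered_vector_space ml_sle;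
  ml_upP : forall x y,
    [/\ ml_sle x (ml_up x y), ml_le y (ml_up x y) &
        forall w, ml_sle x w -> ml_le y w -> ml_le (ml_up x y) w];
  ml_lowP : forall x y,
    [/\ ml_sle (ml_low x y) x, ml_le (ml_low x y) y &
        forall w, ml_sle w x -> ml_le w y -> ml_le w (ml_low x y)];
  ml_sle_le : forall x y, ml_sle x y -> ml_le x y;
  ml_pos : forall x y, ml_sle 0 x -> ml_sle 0 y ->
    ml_sle 0 (ml_up x y) /\ ml_sle 0 (ml_low x y)
}.

Variable M : mixed_lattice.
Local Notation le := (ml_le M).
Local Notation sle := (ml_sle M).

Definition MF1 (A : set V) : set V :=
  [set y | exists x z, [/\ A x, A z, sle x y & le y z]].

Definition MF2 (A : set V) : set V :=
  [set y | exists x z, [/\ A x, A z, le x y & sle y z]].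

Definition solid_le_sle (W : set V) : Prop :=
  forall x y, W y -> le 0 x -> sle x y -> W x.

Definition solid_sle_le (W : set V) : Prop :=
  forall x y, W y -> sle 0 x -> le x y -> W x.

End MixedLattice.

Section SetOps.
Variables (R : realType) (V : lmodType R).

Definition set_add (S T : set V) : set V :=
  [set z | exists a b, [/\ S a, T b & z = a + b]].
Definition set_opp (S : set V) : set V := [set - y | y in S].

Definition balanced_set (A : set V) : Prop :=
  forall (l : R) x, `|l| <= 1 -> A x -> A (l *: x).

Definition absorbing_set (A : set V) : Prop :=
  forall x : V, exists2 r : R, 0 < r &
    forall l : R, r <= `|l| -> exists2 a, A a & x = l *: a.
End SetOps.

Definition topological_mixed_lattice (R : realType)
  (V : topologicalLmodType R) (M : mixed_lattice V) : Prop :=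
  continuous (fun p : V * V => ml_up M p.1 p.2) /\
  continuous (fun p : V * V => ml_low M p.1 p.2).

Definition locally_mixed_full (R : realType)
  (V : topologicalLmodType R) (M : mixed_lattice V) : Prop :=
  forall U : set V, nbhs (0 : V) U ->
    exists W : set V, [/\ nbhs (0 : V) W, W `<=` U & solid_sle_le M W].

(** locally convex: the topology has a basis of convex sets
    (as in the mixin of MathComp-Analysis' tvsType) *)
Definition locally_convex_top (R : realType) (V : topologicalLmodType R) : Prop :=
  exists2 B : set_system V, (forall b, b \in B -> @convex_set R V b) & basis B.

(* Main.v *)
Require Import Defs.
From HB Require Import structures.
From mathcomp Require Import all_boot all_order all_algebra.
From mathcomp Require Import all_classical all_reals all_analysis.
Import Order.TTheory GRing.Theory Num.Theory.
Local Open Scope classical_set_scope.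
Local Open Scope ring_scope.

Section OVS.
Context {R : realType} {V : lmodType R} {le : V -> V -> Prop} (H : ordered_vector_space le).

Lemma ovs_refl x : le x x. Proof. by case: H. Qed.
Lemma ovs_trans {x y z} : le x y -> le y z -> le x z.
Proof. by case: H => _ _ + _ _; apply. Qed.
Lemma ovs_addr {x y} z : le x y -> le (x + z) (y + z).
Proof. by case: H => _ _ _ + _; apply. Qed.
Lemma ovs_addl {x y} z : le x y -> le (z + x) (z + y).
Proof. by rewrite ![z + _]addrC; apply: ovs_addr. Qed.
Lemma ovs_add {x y x' y'} : le x y -> le x' y' -> le (x + x') (y + y').
Proof. move=> h1 h2; apply: (ovs_trans (ovs_addr x' h1)); exact: ovs_addl. Qed.
Lemma ovs_scale (a : R) {x y} : 0 <= a -> le x y -> le (a *: x) (a *: y).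
Proof. by case: H => _ _ _ _; apply. Qed.
Lemma ovs_opp {x y} : le x y -> le (- y) (- x).
Proof.
move=> h; have := ovs_addr (- x - y) h.
by rewrite addrA subrr add0r addrCA subrr addr0.
Qed.
Lemma ovs_sub {x y z} : le x (y + z) -> le (x - y) z.
Proof. by move=> /(ovs_addr (- y)); rewrite addrAC subrr add0r. Qed.
Lemma ovs_scaleN (a : R) {x y} : a <= 0 -> le x y -> le (a *: y) (a *: x).
Proof.
move=> a0 h; have := ovs_opp (ovs_scale (- a) (ltac:(by rewrite oppr_ge0)) h).
by rewrite !scaleNr !opprK.
Qed.
End OVS.

Section PartA.
Variables (R : realType) (V : lmodType R) (M : mixed_lattice V).
Local Notation le := (ml_le M).
Local Notation sle := (ml_sle M).
Let Hle := ml_le_ovs M.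
Let Hsle := ml_sle_ovs M.
Variable A : set V.
Hypothesis bA : balanced_set A.
Hypothesis aA : absorbing_set A.

Lemma A0 : A 0.
Proof.
have [r r0 h] := aA 0.
have [a Aa _] := h r ltac:(by rewrite ger0_norm ?(ltW r0)).
by rewrite -(scale0r a); apply: bA => //; rewrite normr0.
Qed.

Lemma AN x : A x -> A (- x).
Proof. by move=> Ax; rewrite -scaleN1r; apply: bA => //; rewrite normrN normr1. Qed.

Lemma MF1_opp : MF1 M A = set_opp (MF2 M A).
Proof.
apply/seteqP; split => y.
  move=> [x [z [Ax Az xy yz]]]; exists (- y); last by rewrite opprK.
  exists (- z), (- x); split; [exact: AN|exact: AN|exact: ovs_opp|exact: ovs_opp].
move=> [y' [x [z [Ax Az xy yz]]] <-].
exists (- z), (- x); split; [exact: AN|exact: AN|exact: ovs_opp|exact: ovs_opp].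
Qed.

Lemma MF1_scale (l : R) y : `|l| <= 1 -> MF1 M A y ->
  (0 <= l -> MF1 M A (l *: y)) /\ (l <= 0 -> MF2 M A (l *: y)).
Proof.
move=> hl [x [z [Ax Az xy yz]]]; split => l0.
  exists (l *: x), (l *: z); split; try exact: bA; exact: ovs_scale.
exists (l *: z), (l *: x); split; try exact: bA; exact: ovs_scaleN.
Qed.

Lemma MF2_scale (l : R) y : `|l| <= 1 -> MF2 M A y ->
  (0 <= l -> MF2 M A (l *: y)) /\ (l <= 0 -> MF1 M A (l *: y)).
Proof.
move=> hl [x [z [Ax Az xy yz]]]; split => l0.
  exists (l *: x), (l *: z); split; try exact: bA; exact: ovs_scale.
exists (l *: z), (l *: x); split; try exact: bA; exact: ovs_scaleN.
Qed.

Let B := set_add (MF1 M A) (MF2 M A).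

Lemma B_balanced : balanced_set B.
Proof.
move=> l y hl [u [v [hu hv ->]]].
have [l0|l0] := leP 0 l.
  exists (l *: u), (l *: v); split; [exact: (MF1_scale l u hl hu).1 l0|
    exact: (MF2_scale l v hl hv).1 l0| by rewrite scalerDr].
exists (l *: v), (l *: u); split; [exact: (MF2_scale l v hl hv).2 (ltW l0)|
    exact: (MF1_scale l u hl hu).2 (ltW l0)| by rewrite scalerDr addrC].
Qed.

Lemma A_sub_B : A `<=` B.
Proof.
move=> a Aa; exists a, 0; split; last by rewrite addr0.
  by exists a, a; split => //; [apply: (ovs_refl Hsle)|apply: (ovs_refl Hle)].
by exists 0, 0; split; [exact: A0|exact: A0|exact: (ovs_refl Hle)|exact: (ovs_refl Hsle)].
Qed.

Lemma absorbing_sub (S T : set V) : S `<=` T -> absorbing_set S -> absorbing_set T.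
Proof.
move=> ST aS x; have [r r0 h] := aS x; exists r => // l /h [a Sa ->].
by exists a => //; apply: ST.
Qed.

Lemma B_absorbing : absorbing_set B.
Proof. exact: absorbing_sub A_sub_B aA. Qed.

Lemma B_solid1 : solid_le_sle M B.
Proof.
move=> x y [u [v [[a1 [z1 [Aa1 Az1 au uz]]] [a2 [z2 [Aa2 Az2 av vz]]] ->]]] x0 xy.
exists u, (x - u); split; last by rewrite addrC subrK.
  by exists a1, z1.
exists (- z1), z2; split; [exact: AN|by []| |].
  have := ovs_add Hle (ovs_opp Hle uz) x0.
  by rewrite addr0 addrC.
apply: (ovs_trans Hsle _ vz); exact: (ovs_sub Hsle).
Qed.

Lemma B_solid2 : solid_sle_le M B.
Proof.
move=> x y [u [v [[a1 [z1 [Aa1 Az1 au uz]]] [a2 [z2 [Aa2 Az2 av vz]]] ->]]] x0 xy.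
exists (x - v), v; split; last by rewrite subrK.
  exists (- z2), z1; split; [exact: AN|by []| |].
    have := ovs_add Hsle x0 (ovs_opp Hsle vz).
    by rewrite add0r.
  apply: (ovs_trans Hle _ uz); apply: (ovs_sub Hle); by rewrite addrC.
by exists a2, z2.
Qed.

End PartA.

Section Conv.
Context {R : realType} {V : lmodType R}.
Local Open Scope convex_scope.

Lemma ovs_conv (le : V -> V -> Prop) (H : ordered_vector_space le) (a b : R) x y x' y' :
  0 <= a -> 0 <= b -> le x y -> le x' y' -> le (a *: x + b *: x') (a *: y + b *: y').
Proof.
move=> a0 b0 h1 h2; apply: (ovs_add H); exact: (ovs_scale H).
Qed.

Lemma convE (x y : convex_lmodType V) (l : {i01 R}) :
  x <| l |> y = (l%:num *: x + (1 - l%:num) *: y :> V).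
Proof. by []. Qed.

Lemma i01_ge0 (l : {i01 R}) : 0 <= l%:num. Proof. exact: ge0. Qed.
Lemma i01_onem_ge0 (l : {i01 R}) : 0 <= 1 - l%:num. Proof. by rewrite subr_ge0 le1. Qed.

Variable M : mixed_lattice V.

Lemma MF1_convex (A : set V) : @convex_set R V A -> @convex_set R V (MF1 M A).
Proof.
move=> cA y y' l /set_mem [x [z [Ax Az xy yz]]] /set_mem [x' [z' [Ax' Az' xy' yz']]].
apply/mem_set; exists ((x : convex_lmodType V) <| l |> x'), ((z : convex_lmodType V) <| l |> z'); split.
- by apply/set_mem/cA; apply/mem_set.
- by apply/set_mem/cA; apply/mem_set.
- rewrite !convE; apply: ovs_conv (ml_sle_ovs M) _ _ _ _ _ _ (i01_ge0 l) (i01_onem_ge0 l) xy xy'.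
- rewrite !convE; apply: ovs_conv (ml_le_ovs M) _ _ _ _ _ _ (i01_ge0 l) (i01_onem_ge0 l) yz yz'.
Qed.

Lemma MF2_convex (A : set V) : @convex_set R V A -> @convex_set R V (MF2 M A).
Proof.
move=> cA y y' l /set_mem [x [z [Ax Az xy yz]]] /set_mem [x' [z' [Ax' Az' xy' yz']]].
apply/mem_set; exists ((x : convex_lmodType V) <| l |> x'), ((z : convex_lmodType V) <| l |> z'); split.
- by apply/set_mem/cA; apply/mem_set.
- by apply/set_mem/cA; apply/mem_set.
- rewrite !convE; apply: ovs_conv (ml_le_ovs M) _ _ _ _ _ _ (i01_ge0 l) (i01_onem_ge0 l) xy xy'.
- rewrite !convE; apply: ovs_conv (ml_sle_ovs M) _ _ _ _ _ _ (i01_ge0 l) (i01_onem_ge0 l) yz yz'.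
Qed.

Lemma add_convex (S T : set V) : @convex_set R V S -> @convex_set R V T ->
  @convex_set R V (set_add S T).
Proof.
move=> cS cT y y' l /set_mem [u [v [Su Tv ->]]] /set_mem [u' [v' [Su' Tv' ->]]].
apply/mem_set; exists ((u : convex_lmodType V) <| l |> u'), ((v : convex_lmodType V) <| l |> v'); split.
- by apply/set_mem/cS; apply/mem_set.
- by apply/set_mem/cT; apply/mem_set.
- rewrite !convE !scalerDr; rewrite -!addrA; congr (_ + _); rewrite addrCA; done.
Qed.

End Conv.
From mathcomp Require Import ring lra.
Section Top.
Context {R : realType} {V : topologicalLmodType R}.

Lemma nbhs_add_half (U : set V) : nbhs (0:V) U ->
  exists2 U1 : set V, nbhs 0 U1 & forall a b, U1 a -> U1 b -> U (a + b).
Proof.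
move=> hU.
have := @add_continuous V (0,0). rewrite /continuous_at /= addr0.
move=> /(_ U hU) /= [[P Q] /= [hP hQ] sub].
exists (P `&` Q); first exact: filterI.
by move=> a b [Pa _] [_ Qb]; apply: (sub (a,b)).
Qed.

Lemma nbhs_scale_small (U : set V) : nbhs (0:V) U ->
  exists2 d : R, 0 < d & exists2 N : set V, nbhs 0 N & forall s x, `|s| < d -> N x -> U (s *: x).
Proof.
move=> hU.
have := @scale_continuous R V (0,0). rewrite /continuous_at /= scale0r.
move=> /(_ U hU) /= [[P Q] /= [hP hQ] sub].
move: hP => /nbhs_ballP [e e0 he]. exists e => //. exists Q => // s x hs Qx.
apply: (sub (s,x)); split => //. apply: he. by rewrite /ball /= sub0r normrN.
Qed.

Lemma nbhs_scale_pre (c : R) (N : set V) : nbhs (0:V) N -> nbhs (0:V) [set y | N (c *: y)].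
Proof.
move=> hN.
have := @scale_continuous R V (c,0). rewrite /continuous_at /= scaler0.
move=> /(_ N hN) /= [[P Q] /= [hP hQ] sub].
apply: filterS hQ => y Qy; apply: (sub (c,y)); split => //.
exact: nbhs_singleton.
Qed.

Lemma nbhs_absorbing (U : set V) : nbhs (0:V) U -> absorbing_set U.
Proof.
move=> hU x.
have := @scale_continuous R V (0,x). rewrite /continuous_at /= scale0r.
move=> /(_ U hU) /= [[P Q] /= [hP hQ] sub].
move: hP => /nbhs_ballP [e /= e0 he].
exists (2 / e); first by rewrite divr_gt0.
move=> l hl.
have l0 : 0 < `|l| by apply: lt_le_trans hl; rewrite divr_gt0.
have ln0 : l != 0 by rewrite -normr_gt0.
exists (l^-1 *: x); last by rewrite scalerA mulfV ?ln0 // scale1r.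
apply: (sub (l^-1, x)); split; last exact: nbhs_singleton.
apply: he; rewrite /ball /= sub0r normrN normfV.
apply: (@le_lt_trans _ _ (e / 2)).
  by rewrite -invf_div lef_pV2 ?posrE ?divr_gt0.
lra.
Qed.

Definition core (U : set V) : set V := [set y | forall l : R, `|l| <= 1 -> U (l *: y)].

Lemma core_sub U : core U `<=` U.
Proof. by move=> y /(_ 1); rewrite normr1 scale1r; apply. Qed.

Lemma core_balanced U : balanced_set (core U).
Proof.
move=> l y hl hy l' hl'; rewrite scalerA; apply: hy.
by rewrite normrM; apply: mulr_ile1.
Qed.

Lemma core_nbhs U : nbhs (0:V) U -> nbhs (0:V) (core U).
Proof.
move=> /nbhs_scale_small [d d0 [N hN hsub]].
move: (nbhs_scale_pre (2 / d) N hN); apply: filterS => y Ny l hl.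
have -> : l *: y = (l * (d / 2)) *: ((2 / d) *: y).
  rewrite scalerA; congr (_ *: _); field; lra.
apply: hsub => //.
have d2 : 0 <= d / 2 by rewrite divr_ge0 // ltW.
rewrite normrM (ger0_norm d2).
have : 0 <= `|l| by [].
nra.
Qed.

Local Open Scope convex_scope.
Lemma core_convex U : @convex_set R V U -> @convex_set R V (core U).
Proof.
move=> cU y y' t /set_mem hy /set_mem hy'; apply/mem_set => l hl.
have -> : l *: ((y : convex_lmodType V) <| t |> y') =
   ((l *: y : convex_lmodType V) <| t |> (l *: y')).
  by rewrite !convE scalerDr !scalerA [l * _]mulrC [l * (1 - _)]mulrC.
by apply/set_mem/cU; apply/mem_set; [apply: hy|apply: hy'].
Qed.

End Top.

Section Key.
Context {R : realType} {V : topologicalLmodType R} (M : mixed_lattice V).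

Lemma sub_W (W0 W1 : set V) : nbhs (0:V) W1 -> (forall a b, W1 a -> W1 b -> W0 (a + b)) ->
  W1 `<=` W0.
Proof. by move=> h s x Wx; rewrite -[x]addr0; apply: s => //; apply: nbhs_singleton. Qed.

Lemma key (U : set V) : locally_mixed_full M -> nbhs (0:V) U ->
  exists2 W1 : set V, nbhs 0 W1 & forall A : set V, balanced_set A -> A `<=` W1 ->
    set_add (MF1 M A) (MF2 M A) `<=` U.
Proof.
move=> hL hU.
have [U1 hU1 s1] := nbhs_add_half _ hU.
have [U2 hU2 s2] := nbhs_add_half _ hU1.
have hU3 := core_nbhs _ hU2.
have [W0 [hW0 W0U3 sW0]] := hL _ hU3.
have [W1 hW1 s3] := nbhs_add_half _ hW0.
exists W1 => // A bA AW1 y [u [v [[x [z [Ax Az xu uz]]] [x' [z' [Ax' Az' xv vz]]] ->]]].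
have W10 := sub_W _ _ hW1 s3.
have W0U2 : W0 `<=` U2 by move=> w /W0U3; apply: core_sub.
apply: s1.
  have -> : u = x + (u - x) by rewrite addrC subrK.
  apply: s2; first by apply/W0U2/W10/AW1.
  apply: W0U2; apply: (sW0 _ (z - x)).
  - apply: s3; first exact: AW1.
    by apply: AW1; rewrite -scaleN1r; apply: bA => //; rewrite normrN normr1.
  - by have := ovs_addr (ml_sle_ovs M) (- x) xu; rewrite subrr.
  - by have := ovs_addr (ml_le_ovs M) (- x) uz.
have -> : v = z' + - (z' - v) by rewrite opprB addrC subrK.
apply: s2; first by apply/W0U2/W10/AW1.
have : core U2 (z' - v).
  apply: W0U3; apply: (sW0 _ (z' - x')).
  - apply: s3; first exact: AW1.
    by apply: AW1; rewrite -scaleN1r; apply: bA => //; rewrite normrN normr1.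
  - by have := ovs_addr (ml_sle_ovs M) (- v) vz; rewrite subrr.
  - by have := ovs_addl (ml_le_ovs M) z' (ovs_opp (ml_le_ovs M) xv).
move=> /(core_balanced _ (-1 : R) _ ltac:(by rewrite normrN normr1)).
by rewrite scaleN1r; apply: core_sub.
Qed.

End Key.

Theorem proposition3p8 (R : realType) (V : topologicalLmodType R)
  (M : mixed_lattice V) (HM : topological_mixed_lattice M) :
  (forall A : set V, balanced_set A -> absorbing_set A ->
     let B := set_add (MF1 M A) (MF2 M A) in
     [/\ MF1 M A = set_opp (MF2 M A),
         balanced_set B, absorbing_set B,
         solid_le_sle M B & solid_sle_le M B] /\
         (@convex_set R V A ->
            [/\ @convex_set R V (MF1 M A), @convex_set R V (MF2 M A)
              & @convex_set R V B]))
  /\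
  (locally_mixed_full M ->
     (forall U : set V, nbhs (0 : V) U ->
        exists W : set V,
          [/\ nbhs (0 : V) W, W `<=` U, balanced_set W, absorbing_set W &
              solid_le_sle M W /\ solid_sle_le M W]) /\
     (locally_convex_top V ->
        forall U : set V, nbhs (0 : V) U ->
        exists W : set V,
          [/\ nbhs (0 : V) W, W `<=` U, balanced_set W, absorbing_set W &
              [/\ solid_le_sle M W, solid_sle_le M W & @convex_set R V W]])).
Proof.
split.
  move=> A bA aA B; split.
    split; [exact: MF1_opp|exact: B_balanced|exact: B_absorbing|
            exact: B_solid1|exact: B_solid2].
  move=> cA; split; [exact: MF1_convex|exact: MF2_convex|].
  by apply: add_convex; [exact: MF1_convex|exact: MF2_convex].
move=> hL; split.
  move=> U hU; have [W1 hW1 hK] := key _ _ hL hU.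
  pose A := core W1.
  have hA : nbhs (0:V) A := core_nbhs _ hW1.
  have bA : balanced_set A := core_balanced W1.
  have aA : absorbing_set A := nbhs_absorbing _ hA.
  exists (set_add (MF1 M A) (MF2 M A)); split.
  - by move: hA; apply: filterS; apply: A_sub_B.
  - exact: hK (core_sub W1).
  - exact: B_balanced.
  - exact: B_absorbing.
  - by split; [exact: B_solid1|exact: B_solid2].
move=> [Bs cB [Bo hB]] U hU; have [W1 hW1 hK] := key _ _ hL hU.
have [b [Bb b0] bW1] : exists2 b, Bs b /\ b 0 & b `<=` W1.
  have := hB 0 W1 hW1. by move=> [b [Bb b0] bW]; exists b.
have hb : nbhs (0:V) b by apply: open_nbhs_nbhs; split => //; exact: Bo.
pose A := core b.
have hA : nbhs (0:V) A := core_nbhs _ hb.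
have bA : balanced_set A := core_balanced b.
have aA : absorbing_set A := nbhs_absorbing _ hA.
have cA : @convex_set R V A by apply: core_convex; apply: cB; apply/mem_set.
exists (set_add (MF1 M A) (MF2 M A)); split.
- by move: hA; apply: filterS; apply: A_sub_B.
- by apply: hK => // w /core_sub /bW1.
- exact: B_balanced.
- exact: B_absorbing.
- split; [exact: B_solid1|exact: B_solid2|].
  by apply: add_convex; [exact: MF1_convex|exact: MF2_convex].
Qed.
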